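(* Let $T$ be a neutral tree on $n_1\geq 7$ vertices. Then the graph $T^{\dagger}$ (for any choice of pairing in its construction) is neutral.
   Context: All graphs are finite and simple. A leaf is a vertex of degree one. The leaf-connecting operation on a graph $G$ produces $G^{\dagger}$ as follows: (1) for each vertex $v$ of $G$, attach $d_v$ new pendant vertices (leaves) to $v$; (2) repeatedly join a pair of leaves by an edge until no leaf is left (so the new pendant vertices are paired up by a perfect matching). For a graph $G=(V,E)$ with $m=|E|\geq1$ and degrees $d_u$, the assortativity coefficient is $$r(G)=\frac{m^{-1}\sum_{e_{uv}\in E} d_{u}d_{v}-\Big[m^{-1}\sum_{e_{uv}\in E} \tfrac{1}{2}(d_{u}+d_{v})\Big]^{2}}{m^{-1}\sum_{e_{uv}\in E} \tfrac{1}{2}(d^{2}_{u}+d^{2}_{v})-\Big[m^{-1}\sum_{e_{uv}\in E} \tfrac{1}{2}(d_{u}+d_{v})\Big]^{2}},$$ sums over edges counting each edge once, defined whenever the denominator is nonzero; $G$ is neutral if $r(G)$ is defined and equals $0$. *)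

(* Defs.v *)
(* Values of the assortativity coefficient are computed in rat
   (all quantities involved are rational). *)
From mathcomp Require Import all_boot all_order all_algebra.
Set Implicit Arguments. Unset Strict Implicit. Unset Printing Implicit Defensive.
Import Order.TTheory GRing.Theory Num.Theory.

(* A finite simple graph is a symmetric irreflexive relation e on a finType. *)

Definition deg (T : finType) (e : rel T) (v : T) : nat := #|[set u | e v u]|.

Definition edges (T : finType) (e : rel T) : {set T * T} :=
  [set p : T * T | e p.1 p.2 && (enum_rank p.1 < enum_rank p.2)%N].

Definition nedges (T : finType) (e : rel T) : nat := #|edges e|.

Local Open Scope ring_scope.

Definition degQ (T : finType) (e : rel T) (v : T) : rat := (deg e v)%:R.

Definition edge_avg (T : finType) (e : rel T) (f : T -> T -> rat) : rat :=
  (nedges e)%:R^-1 * \sum_(p in edges e) f p.1 p.2.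

Definition assort_num (T : finType) (e : rel T) : rat :=
  edge_avg e (fun u v => degQ e u * degQ e v)
  - (edge_avg e (fun u v => (degQ e u + degQ e v) / 2%:R)) ^+ 2.

Definition assort_den (T : finType) (e : rel T) : rat :=
  edge_avg e (fun u v => (degQ e u ^+ 2 + degQ e v ^+ 2) / 2%:R)
  - (edge_avg e (fun u v => (degQ e u + degQ e v) / 2%:R)) ^+ 2.

Definition assortativity (T : finType) (e : rel T) : rat :=
  assort_num e / assort_den e.

(* G is neutral: r(G) is defined (m >= 1 and nonzero denominator) and r(G) = 0 *)
Definition neutral (T : finType) (e : rel T) : Prop :=
  (0 < nedges e)%N /\ assort_den e != 0 /\ assortativity e = 0.

Definition is_tree (T : finType) (e : rel T) : Prop :=
  (forall u v : T, connect e u v) /\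
  (forall s : seq T, uniq s -> (2 < size s)%N -> ~~ cycle e s).

(* The new pendant vertices: vertex v receives deg v pendants (v, i), i < deg v. *)
Definition pendant (T : finType) (e : rel T) : finType :=
  {v : T & 'I_(deg e v)}.

(* Leaf-connecting operation: given a pairing mu of the pendants
   (a fixed-point-free involution = perfect matching), the graph G^dagger
   on vertex set T + pendants. *)
Definition dagger (T : finType) (e : rel T) (mu : pendant e -> pendant e)
  : rel (T + pendant e)%type :=
  fun x y =>
    match x, y with
    | inl u, inl v => e u v
    | inl u, inr p => tag p == u
    | inr p, inl u => tag p == u
    | inr p, inr q => mu p == q
    end.

(* Main.v *)
Require Import Defs.
From mathcomp Require Import all_boot all_order all_algebra.
From mathcomp Require Import ring lra.
Set Implicit Arguments. Unset Strict Implicit. Unset Printing Implicit Defensive.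
Import Order.TTheory GRing.Theory Num.Theory.
Local Open Scope ring_scope.

Definition osum (T : finType) (e : rel T) (F : T -> T -> rat) : rat :=
  \sum_u \sum_(v | e u v) F u v.

Lemma degQE (T : finType) (e : rel T) u : degQ e u = \sum_(v | e u v) 1.
Proof.
rewrite /degQ /deg -sum1_card natr_sum; apply: eq_bigl => x; by rewrite inE.
Qed.

Lemma osum_edges (T : finType) (e : rel T) (esymm : symmetric e) (eirr : irreflexive e)
  (f : T -> T -> rat) (fsym : forall u v, f u v = f v u) :
  (\sum_(p in edges e) f p.1 p.2) * 2 = osum e f.
Proof.
rewrite /osum pair_big_dep /= [RHS](bigID (fun p : T * T => enum_rank p.1 < enum_rank p.2)%N) /=.
rewrite mulr_natr mulr2n; congr (_ + _).
  by apply: eq_bigl => p; rewrite inE.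
rewrite (reindex_inj (h := fun p : T * T => (p.2, p.1))); last first.
  by move=> [a b] [c d] /= [-> ->].
apply: eq_big => [[a b]|[a b] _] /=; last by rewrite fsym.
rewrite inE /= esymm; case: (boolP (e a b)) => //= eab.
rewrite -leqNgt ltn_neqAle; case: eqVneq => //= h.
by move: eab; rewrite (enum_rank_inj (val_inj (esym h))) eirr.
Qed.

Lemma nedgesE (T : finType) (e : rel T) (esymm : symmetric e) (eirr : irreflexive e) :
  (nedges e)%:R * 2 = \sum_u degQ e u.
Proof.
have := osum_edges esymm eirr (f := fun _ _ => 1) (fun _ _ => erefl).
rewrite sumr_const /osum => ->; apply: eq_bigr => u _; by rewrite degQE.
Qed.

Lemma edge_avgE (T : finType) (e : rel T) (esymm : symmetric e) (eirr : irreflexive e)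
  (f : T -> T -> rat) (fsym : forall u v, f u v = f v u) :
  edge_avg e f = osum e f / \sum_u degQ e u.
Proof.
rewrite /edge_avg -(osum_edges esymm eirr fsym) -(nedgesE esymm eirr).
have [->|n0] := eqVneq ((nedges e)%:R : rat) 0; first by rewrite !(mul0r, invr0, mulr0).
by field.
Qed.

Lemma osum_l (T : finType) (e : rel T) (g : T -> rat) :
  osum e (fun u v => g u) = \sum_u degQ e u * g u.
Proof.
apply: eq_bigr => u _; by rewrite degQE mulr_suml; apply: eq_bigr => v _; rewrite mul1r.
Qed.

Lemma osum_r (T : finType) (e : rel T) (esymm : symmetric e) (g : T -> rat) :
  osum e (fun u v => g v) = \sum_u degQ e u * g u.
Proof.
rewrite /osum; under eq_bigr do rewrite big_mkcond /=.
rewrite exchange_big /=; apply: eq_bigr => v _.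
rewrite degQE mulr_suml [RHS]big_mkcond; apply: eq_bigr => u _.
by rewrite esymm; case: (e v u); rewrite ?mul1r.
Qed.

Lemma osum_lin (T : finType) (e : rel T) (f g : T -> T -> rat) a b :
  osum e (fun u v => a * f u v + b * g u v) = a * osum e f + b * osum e g.
Proof.
rewrite /osum !mulr_sumr -big_split; apply: eq_bigr => u _.
by rewrite !mulr_sumr -big_split.
Qed.

Lemma osum_avg (T : finType) (e : rel T) (esymm : symmetric e) (g : T -> rat) :
  osum e (fun u v => (g u + g v) / 2) = \sum_u degQ e u * g u.
Proof.
transitivity (osum e (fun u v => 2^-1 * g u + 2^-1 * g v)).
  by apply: eq_bigr => u _; apply: eq_bigr => v _; rewrite mulrDl !(mulrC _ 2^-1).
rewrite (@osum_lin _ e (fun u v => g u) (fun u v => g v)) osum_l osum_r //.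
rewrite -mulrDl; have -> : (2^-1 + 2^-1 : rat) = 1 by []. by rewrite mul1r.
Qed.

Section Dag.
Variables (V : finType) (e : rel V) (mu : pendant e -> pendant e).
Hypothesis mu_inv : forall p, mu (mu p) = p.
Hypothesis mu_nofix : forall p, mu p != p.
Hypothesis esymm : symmetric e.
Hypothesis eirr : irreflexive e.

Lemma dag_sym : symmetric (dagger mu).
Proof.
move=> [u|p] [v|q] /=; [exact: (esymm u v) | by [] | by [] |].
by apply/eqP/eqP => <-.
Qed.

Lemma dag_irr : irreflexive (dagger mu).
Proof. by move=> [u|p] /=; [exact: eirr | exact/negbTE]. Qed.

Lemma sum_tag (k : V -> rat) :
  \sum_(p : pendant e) k (tag p) = \sum_u degQ e u * k u.
Proof.
rewrite -(@sig_big_dep _ _ _ V (fun v => 'I_(deg e v)) xpredT (fun _ _ => true) (fun i _ => k i)) /=.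
apply: eq_bigr => u _; by rewrite sumr_const card_ord /degQ mulr_natl.
Qed.

Lemma tagcount u (c : rat) : \sum_(p : pendant e | tag p == u) c = degQ e u * c.
Proof.
rewrite big_mkcond /= (sum_tag (fun w => if w == u then c else 0)).
rewrite (bigD1 u) //= eqxx big1 ?addr0 // => w /negbTE ->; by rewrite mulr0.
Qed.

Lemma nbr_inl u (h : (V + pendant e)%type -> rat) :
  \sum_(y | dagger mu (inl u) y) h y =
  \sum_(v | e u v) h (inl v) + \sum_(p | tag p == u) h (inr p).
Proof. by rewrite big_sumType. Qed.

Lemma nbr_inr p (h : (V + pendant e)%type -> rat) :
  \sum_(y | dagger mu (inr p) y) h y = h (inl (tag p)) + h (inr (mu p)).
Proof.
rewrite big_sumType /=; congr (_ + _).
  by rewrite (big_pred1 (tag p)) // => v; rewrite eq_sym.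
by rewrite (big_pred1 (mu p)) // => v; rewrite eq_sym.
Qed.

Lemma deg_inl u : degQ (dagger mu) (inl u) = 2 * degQ e u.
Proof. by rewrite degQE nbr_inl tagcount -degQE mulr1 mulr2n mulrDl !mul1r. Qed.

Lemma deg_inr p : degQ (dagger mu) (inr p) = 2.
Proof. by rewrite degQE nbr_inr. Qed.


Local Notation d := (degQ e).
Local Notation D := (degQ (dagger mu)).

Lemma dsumG (G : rat -> rat) :
  \sum_x D x * G (D x) =
  \sum_u (2 * d u) * G (2 * d u) + \sum_u d u * (2 * G 2).
Proof.
rewrite big_sumType /=; congr (_ + _).
  by apply: eq_bigr => u _; rewrite deg_inl.
rewrite -(sum_tag (fun _ => 2 * G 2)); apply: eq_bigr => p _; by rewrite deg_inr.
Qed.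

Lemma osum_dag :
  osum (dagger mu) (fun x y => D x * D y) =
  4 * osum e (fun u v => d u * d v) + 8 * \sum_u d u * d u + 4 * \sum_u d u.
Proof.
rewrite /osum big_sumType /=.
transitivity (\sum_u (4 * \sum_(v | e u v) d u * d v + d u * (4 * d u))
   + \sum_u d u * (4 * d u + 4)).
  congr (_ + _).
    apply: eq_bigr => u _; rewrite nbr_inl deg_inl mulr_sumr; congr (_ + _).
      by apply: eq_bigr => v _; rewrite deg_inl; ring.
    rewrite (eq_bigr (fun _ => 2 * d u * 2)); last by move=> p _; rewrite deg_inr.
    by rewrite tagcount; ring.
  rewrite -(sum_tag (fun w => 4 * d w + 4)); apply: eq_bigr => p _.
  by rewrite nbr_inr !deg_inr deg_inl; ring.
rewrite -big_split /= !mulr_sumr -!big_split /=; apply: eq_bigr => u _.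
rewrite -mulr_sumr; ring.
Qed.

End Dag.

Lemma sum_sq_dev (T : finType) (e : rel T) (c : rat) :
  \sum_u degQ e u * (degQ e u - c) ^+ 2 =
  \sum_u degQ e u * degQ e u ^+ 2 - 2 * c * \sum_u degQ e u * degQ e u
  + c ^+ 2 * \sum_u degQ e u.
Proof.
rewrite !mulr_sumr -sumrB -big_split /=; apply: eq_bigr => u _; ring.
Qed.

Lemma sum_sq_dev_ge0 (T : finType) (e : rel T) (c : rat) :
  0 <= \sum_u degQ e u * (degQ e u - c) ^+ 2.
Proof. apply: sumr_ge0 => u _; apply: mulr_ge0; [exact: ler0n | exact: sqr_ge0]. Qed.

Lemma fsym_mul (T : finType) (e : rel T) :
  forall u v, degQ e u * degQ e v = degQ e v * degQ e u.
Proof. by move=> u v; rewrite mulrC. Qed.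
Lemma fsym_avg (T : finType) (e : rel T) (g : T -> rat) :
  forall u v, (g u + g v) / 2 = (g v + g u) / 2.
Proof. by move=> u v; rewrite addrC. Qed.

Lemma num_den (T : finType) (e : rel T) (esymm : symmetric e) (eirr : irreflexive e) :
  assort_num e = osum e (fun u v => degQ e u * degQ e v) / (\sum_u degQ e u)
     - ((\sum_u degQ e u * degQ e u) / (\sum_u degQ e u)) ^+ 2 /\
  assort_den e = (\sum_u degQ e u * degQ e u ^+ 2) / (\sum_u degQ e u)
     - ((\sum_u degQ e u * degQ e u) / (\sum_u degQ e u)) ^+ 2.
Proof.
rewrite /assort_num /assort_den !(edge_avgE esymm eirr); last first.
- by move=> u v; rewrite mulrC.
- by move=> u v; rewrite addrC.
- by move=> u v; rewrite addrC.
rewrite (osum_avg esymm (degQ e)) (osum_avg esymm (fun u => degQ e u ^+ 2)).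
by [].
Qed.

Lemma sum_comb2 (T : finType) (a b c f : T -> rat) k l :
  (forall u, a u + b u = k * c u + l * f u) ->
  \sum_u a u + \sum_u b u = k * \sum_u c u + l * \sum_u f u.
Proof.
move=> h; rewrite -big_split !mulr_sumr -big_split; apply: eq_bigr => u _; exact: h.
Qed.

Theorem lemma4 (V : finType) (e : rel V)
  (esym : symmetric e) (eirr : irreflexive e)
  (htree : is_tree e) (hn : (7 <= #|V|)%N) (hneutral : neutral e)
  (mu : pendant e -> pendant e)
  (mu_inv : forall p, mu (mu p) = p) (mu_nofix : forall p, mu p != p) :
  neutral (dagger mu).
Proof.
have dsym := dag_sym mu_inv esym.
have dirr := dag_irr mu_nofix eirr.
case: hneutral => [m0 [den0 r0]].
have n0 : assort_num e = 0.
  move: r0 => /eqP; rewrite /assortativity mulf_eq0 invr_eq0 (negbTE den0) orbF.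
  by move/eqP.
have [En Ed] := num_den esym eirr.
have [En' Ed'] := num_den dsym dirr.
have hm := nedgesE esym eirr.
have hm' := nedgesE dsym dirr.
have hD1 : \sum_x degQ (dagger mu) x = 4 * \sum_u degQ e u.
  have := dsumG mu (fun _ => 1).
  rewrite (eq_bigr (fun x => degQ (dagger mu) x)) => [->|x _]; last by rewrite mulr1.
  rewrite (@sum_comb2 _ _ _ (degQ e) (degQ e) 2 2) => [|u]; ring.
have hD2 : \sum_x degQ (dagger mu) x * degQ (dagger mu) x =
    4 * \sum_u degQ e u * degQ e u + 4 * \sum_u degQ e u.
  have := dsumG mu (fun x => x) => ->.
  apply: sum_comb2 => u; ring.
have hD3 : \sum_x degQ (dagger mu) x * degQ (dagger mu) x ^+ 2 =
    8 * \sum_u degQ e u * degQ e u ^+ 2 + 8 * \sum_u degQ e u.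
  have := dsumG mu (fun x => x ^+ 2) => ->.
  apply: sum_comb2 => u; ring.
have hP := osum_dag mu.
rewrite hP hD1 hD2 in En'; rewrite hD1 hD2 hD3 in Ed'; rewrite hD1 in hm'.
have hc := sum_sq_dev_ge0 e ((\sum_u degQ e u * degQ e u) / (\sum_u degQ e u)).
have hc1 := sum_sq_dev_ge0 e 1.
rewrite sum_sq_dev in hc; rewrite sum_sq_dev in hc1.
move: En Ed En' Ed' hm hm' hc hc1 n0 den0 m0.
set P := osum e _; set S2 := \sum_u _ * _; set S3 := \sum_u _ * _ ^+ 2;
  set m := \sum_u degQ e u.
move=> En Ed En' Ed' hm hm' hc hc1 n0 den0 m0.
have mpos : 0 < m by rewrite -hm mulr_gt0 // ltr0n.
have mne : m != 0 by rewrite gt_eqF.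
have hden : assort_den e = (S3 - 2 * (S2 / m) * S2 + (S2 / m) ^+ 2 * m) / m.
  by rewrite Ed; field.
have dpos : 0 < assort_den e.
  by rewrite lt_def den0 /= hden divr_ge0 // ltW.
have h1 : 0 <= (S3 - 2 * 1 * S2 + 1 ^+ 2 * m) / m by rewrite divr_ge0 // ltW.
have hden' : assort_den (dagger mu) = assort_den e + (S3 - 2 * 1 * S2 + 1 ^+ 2 * m) / m.
  by rewrite Ed' Ed; field.
have dpos' : 0 < assort_den (dagger mu) by rewrite hden'; lra.
have hnum' : assort_num (dagger mu) = assort_num e by rewrite En' En; field.
split; last split.
- have : 0 < (nedges (dagger mu))%:R * 2 :> rat by rewrite hm' mulr_gt0.
  by rewrite pmulr_lgt0 // ltr0n.
- by rewrite gt_eqF.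
- by rewrite /assortativity hnum' n0 mul0r.
Qed.
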